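(* Let $0\le \underline c_{ii}<\overline c_{ii}$, $0\le \underline c_{jj}<\overline c_{jj}$, $\underline c_{ij}<\overline c_{ij}$, $\underline s_{ij}<\overline s_{ij}$ be real numbers and let $\mathcal{D}_{ij}=[\underline c_{ii},\overline c_{ii}]\times[\underline c_{jj},\overline c_{jj}]\times[\underline c_{ij},\overline c_{ij}]\times[\underline s_{ij},\overline s_{ij}]\subset\mathbb{R}^4$, with points written $z=(c_{ii},c_{jj},c_{ij},s_{ij})$. Define $\mathcal{K}^{=}=\{z\in\mathcal{D}_{ij}: c_{ij}^2+s_{ij}^2=c_{ii}c_{jj}\}$, $\mathcal{K}^{\le}=\{z\in\mathcal{D}_{ij}: c_{ij}^2+s_{ij}^2\le c_{ii}c_{jj}\}$ and $G=\{z\in\mathbb{R}^4: c_{ij}^2+s_{ij}^2\ge c_{ii}c_{jj}\}$. Let $V$ be the (finite) set of all points $z$ such that, for some one-dimensional face (edge) $E$ of the hypercube $\mathcal{D}_{ij}$ (i.e. a segment obtained by fixing three of the four coordinates at one of their bounds), $z$ is an extreme point of $\operatorname{conv}(E\cap G)$. Then $$\operatorname{conv}(\mathcal{K}^{=})=\mathcal{K}^{\le}\cap\operatorname{conv}(V)=\Big\{z\in\mathcal{D}_{ij}:\ \exists\lambda\ge 0,\ c_{ij}^2+s_{ij}^2\le c_{ii}c_{jj},\ z=\sum_{k=1}^K\lambda_k z^k,\ \sum_{k=1}^K\lambda_k=1\Big\},$$ where $z^1,\dots,z^K$ is an enumeration of $V$ (so $K\le 32\cdot 2$ is finite). *)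

(* Defs.v *)
From Stdlib Require Import Reals List.
Import ListNotations.
Open Scope R_scope.

Record pt := mkpt { cii : R; cjj : R; cij : R; sij : R }.

Definition coord (i : nat) (z : pt) : R :=
  match i with 0%nat => cii z | 1%nat => cjj z | 2%nat => cij z | _ => sij z end.

Definition pzero : pt := mkpt 0 0 0 0.
Definition padd (x y : pt) : pt :=
  mkpt (cii x + cii y) (cjj x + cjj y) (cij x + cij y) (sij x + sij y).
Definition pscale (t : R) (x : pt) : pt :=
  mkpt (t * cii x) (t * cjj x) (t * cij x) (t * sij x).
Definition psum (l : list pt) : pt := fold_right padd pzero l.

Definition conv (S : pt -> Prop) (z : pt) : Prop :=
  exists l : list (R * pt),
    Forall (fun p => 0 <= fst p /\ S (snd p)) l /\
    fold_right Rplus 0 (map fst l) = 1 /\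
    z = psum (map (fun p => pscale (fst p) (snd p)) l).

Definition extreme (C : pt -> Prop) (z : pt) : Prop :=
  C z /\ forall x y t, C x -> C y -> 0 < t < 1 ->
    z = padd (pscale t x) (pscale (1 - t) y) -> x = z /\ y = z.

Definition box (lo hi : pt) (z : pt) : Prop :=
  forall i, (i < 4)%nat -> coord i lo <= coord i z <= coord i hi.

Definition edge (lo hi : pt) (k : nat) (b : nat -> bool) (z : pt) : Prop :=
  box lo hi z /\
  forall i, (i < 4)%nat -> i <> k ->
    coord i z = (if b i then coord i hi else coord i lo).

Definition Keq (lo hi : pt) (z : pt) : Prop :=
  box lo hi z /\ cij z ^ 2 + sij z ^ 2 = cii z * cjj z.
Definition Kle (lo hi : pt) (z : pt) : Prop :=
  box lo hi z /\ cij z ^ 2 + sij z ^ 2 <= cii z * cjj z.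
Definition Gset (z : pt) : Prop := cij z ^ 2 + sij z ^ 2 >= cii z * cjj z.

Definition Vset (lo hi : pt) (z : pt) : Prop :=
  exists k b, (k < 4)%nat /\
    extreme (conv (fun x => edge lo hi k b x /\ Gset x)) z.

Definition comb_of (l : list pt) (z : pt) : Prop :=
  exists lam : list R,
    length lam = length l /\ Forall (fun x => 0 <= x) lam /\
    fold_right Rplus 0 lam = 1 /\
    z = psum (map (fun p => pscale (fst p) (snd p)) (combine lam l)).

(* Main.v *)
Require Import Defs.
From Stdlib Require Import Reals List Lra Psatz Classical Lia.
Import ListNotations.
Open Scope R_scope.

Lemma pt_eq4 (a b : pt) : cii a = cii b -> cjj a = cjj b -> cij a = cij b -> sij a = sij b -> a = b.
Proof. destruct a, b; simpl; intros; subst; reflexivity. Qed.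

Lemma pt_eq (a b : pt) : (forall i, (i < 4)%nat -> coord i a = coord i b) -> a = b.
Proof. intros H. apply pt_eq4; [apply (H 0%nat)|apply (H 1%nat)|apply (H 2%nat)|apply (H 3%nat)]; lia. Qed.

Lemma coord_add i x y : coord i (padd x y) = coord i x + coord i y.
Proof. destruct i as [|[|[|]]]; reflexivity. Qed.
Lemma coord_scale i t x : coord i (pscale t x) = t * coord i x.
Proof. destruct i as [|[|[|]]]; reflexivity. Qed.
Lemma coord_zero i : coord i pzero = 0.
Proof. destruct i as [|[|[|]]]; reflexivity. Qed.

Definition wsum (l : list (R * pt)) := fold_right Rplus 0 (map fst l).
Definition lsum (l : list (R * pt)) := psum (map (fun p => pscale (fst p) (snd p)) l).
Definition resc (c : R) (p : R * pt) : R * pt := (c * fst p, snd p).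

Lemma wsum_resc c l : wsum (map (resc c) l) = c * wsum l.
Proof. induction l; unfold wsum in *; simpl; [ring|rewrite IHl; ring]. Qed.
Lemma lsum_resc c l : lsum (map (resc c) l) = pscale c (lsum l).
Proof. induction l; unfold lsum in *; simpl.
 - apply pt_eq4; simpl; ring.
 - rewrite IHl. apply pt_eq4; simpl; ring. Qed.
Lemma wsum_app l1 l2 : wsum (l1 ++ l2) = wsum l1 + wsum l2.
Proof. induction l1; unfold wsum in *; simpl; [ring|rewrite IHl1; ring]. Qed.
Lemma lsum_app l1 l2 : lsum (l1 ++ l2) = padd (lsum l1) (lsum l2).
Proof. induction l1; unfold lsum in *; simpl.
 - apply pt_eq4; simpl; ring.
 - rewrite IHl1. apply pt_eq4; simpl; ring. Qed.

Lemma Forall_resc (S : pt -> Prop) c l : 0 <= c -> Forall (fun p => 0 <= fst p /\ S (snd p)) l ->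
  Forall (fun p => 0 <= fst p /\ S (snd p)) (map (resc c) l).
Proof. intros Hc HF. induction HF; simpl; constructor; auto.
 destruct H; unfold resc; simpl; split; auto. apply Rmult_le_pos; auto. Qed.

Definition convl (S : pt -> Prop) l z :=
  Forall (fun p => 0 <= fst p /\ S (snd p)) l /\ wsum l = 1 /\ z = lsum l.

Lemma conv_convl S z : conv S z <-> exists l, convl S l z.
Proof. reflexivity. Qed.

Definition convex (S : pt -> Prop) := forall x y t, S x -> S y -> 0 <= t <= 1 ->
  S (padd (pscale t x) (pscale (1 - t) y)).

Lemma wsum_zero l : Forall (fun p => 0 <= fst p) l -> wsum l = 0 -> lsum l = pzero.
Proof. induction l as [|[a s] l IH]; intros HF HS; [reflexivity|].
 inversion HF; subst. unfold wsum, lsum in *; simpl in *.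
 assert (0 <= fold_right Rplus 0 (map fst l)).
 { clear -H2. induction l; simpl; [lra|inversion H2; subst; specialize (IHl H3); simpl in *; lra]. }
 assert (a = 0) by (simpl in *; lra). subst.
 rewrite IH; [|auto|lra]. apply pt_eq4; simpl; ring. Qed.

Lemma conv_cons S a s rest z : convl S ((a, s) :: rest) z ->
  (a = 1 /\ z = s) \/
  (0 <= a < 1 /\ S s /\ convl S (map (resc (/ (1 - a))) rest) (lsum (map (resc (/ (1 - a))) rest)) /\
   z = padd (pscale a s) (pscale (1 - a) (lsum (map (resc (/ (1 - a))) rest)))).
Proof.
 intros [HF [HW HZ]]. inversion HF; subst. simpl in H1. destruct H1 as [Ha Hs].
 assert (Hnn : 0 <= wsum rest).
 { clear -H2. induction rest; unfold wsum in *; simpl; [lra|inversion H2; subst; specialize (IHrest H3); simpl in *; lra]. }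
 unfold wsum in HW; simpl in HW. fold (wsum rest) in HW.
 destruct (Req_dec a 1) as [E|E].
 - left. split; auto. unfold lsum; simpl. fold (lsum rest).
   rewrite wsum_zero; [|eapply Forall_impl; [|exact H2]; simpl; tauto|lra].
   subst. apply pt_eq4; simpl; ring.
 - right. split; [lra|]. split; auto. split.
   + split; [|split; auto].
     * apply Forall_resc; auto. left; apply Rinv_0_lt_compat; lra.
     * rewrite wsum_resc. field_simplify_eq; lra.
   + rewrite lsum_resc. unfold lsum; simpl. fold (lsum rest).
     apply pt_eq4; simpl; field; lra.
Qed.

Lemma convex_conv_sub S : convex S -> forall z, conv S z -> S z.
Proof.
 intros HC z [l Hl]. revert z Hl.
 induction l as [l IH] using (well_founded_induction (Wf_nat.well_founded_ltof _ (@length (R*pt)))).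
 intros z Hl. destruct l as [|[a s] rest].
 - destruct Hl as [_ [HW _]]. unfold wsum in HW; simpl in HW; lra.
 - destruct (conv_cons _ _ _ _ _ Hl) as [[_ ->]|[Ha [Hs [Hc ->]]]].
   + destruct Hl as [HF _]. inversion HF; subst; tauto.
   + apply HC; auto; [|lra]. apply (IH (map (resc (/ (1 - a))) rest)); auto.
     unfold Wf_nat.ltof; rewrite length_map; simpl; lia.
Qed.

Lemma conv_incl (S : pt -> Prop) z : S z -> conv S z.
Proof. intros H. exists [(1, z)]. split.
 - apply Forall_cons; [simpl; split; [lra|auto]|apply Forall_nil].
 - split; [simpl; ring|]. apply pt_eq4; simpl; ring. Qed.

Lemma conv_mono (S T : pt -> Prop) z : (forall x, S x -> T x) -> conv S z -> conv T z.
Proof. intros H [l [HF HR]]. exists l; split; auto. eapply Forall_impl; [|exact HF]. simpl; intros p [? ?]; auto. Qed.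

Lemma conv_convex S : convex (conv S).
Proof.
 intros x y t [l1 [F1 [W1 Z1]]] [l2 [F2 [W2 Z2]]] Ht.
 exists (map (resc t) l1 ++ map (resc (1 - t)) l2). split; [|split].
 - apply Forall_app; split; apply Forall_resc; auto; lra.
 - change (wsum (map (resc t) l1 ++ map (resc (1 - t)) l2) = 1).
   rewrite wsum_app, !wsum_resc. unfold wsum in *. rewrite W1, W2. ring.
 - change (padd (pscale t x) (pscale (1 - t) y) = lsum (map (resc t) l1 ++ map (resc (1 - t)) l2)).
   rewrite lsum_app, !lsum_resc. unfold lsum in *. rewrite <- Z1, <- Z2. reflexivity.
Qed.

Lemma conv_conv S z : conv (conv S) z -> conv S z.
Proof. apply convex_conv_sub, conv_convex. Qed.

Lemma extreme_in S z : extreme (conv S) z -> S z.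
Proof.
 intros [[l Hl] HE]. revert Hl.
 induction l as [l IH] using (well_founded_induction (Wf_nat.well_founded_ltof _ (@length (R*pt)))).
 intros Hl. destruct l as [|[a s] rest].
 - destruct Hl as [_ [HW _]]. unfold wsum in HW; simpl in HW; lra.
 - pose proof Hl as Hl0. destruct (conv_cons _ _ _ _ _ Hl) as [[_ ->]|[Ha [Hs [Hc Hz]]]].
   + destruct Hl as [HF _]. inversion HF; subst; tauto.
   + destruct (Req_dec a 0) as [E|E].
     * subst a. apply (IH (map (resc (/ (1 - 0))) rest)).
       { unfold Wf_nat.ltof; rewrite length_map; simpl; lia. }
       replace z with (lsum (map (resc (/ (1 - 0))) rest)); auto.
       rewrite Hz. apply pt_eq4; simpl; ring.
     * destruct (HE s _ a (conv_incl _ _ Hs) (ex_intro (fun l => convl S l _) _ Hc)) as [E1 _]; [lra|auto|].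
       rewrite <- E1; auto.
Qed.


Definition qf z := cij z ^ 2 + sij z ^ 2 - cii z * cjj z.
Definition bil x d := 2 * cij x * cij d + 2 * sij x * sij d - cii x * cjj d - cjj x * cii d.
Lemma qf_line x d t : qf (padd x (pscale t d)) = qf x + t * bil x d + t ^ 2 * qf d.
Proof. unfold qf, bil; simpl; ring. Qed.
Lemma Gset_qf z : Gset z <-> 0 <= qf z.
Proof. unfold Gset, qf; split; intros; lra. Qed.

Lemma convex_comb_R lo hi a b t : lo <= a <= hi -> lo <= b <= hi -> 0 <= t <= 1 ->
  lo <= t * a + (1 - t) * b <= hi.
Proof. intros; split; nra. Qed.

Lemma box_convex lo hi : convex (box lo hi).
Proof. intros x y t Hx Hy Ht i Hi. rewrite coord_add, !coord_scale.
 apply convex_comb_R; auto. Qed.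

Lemma box_nonneg lo hi z : 0 <= cii lo -> 0 <= cjj lo -> box lo hi z -> 0 <= cii z /\ 0 <= cjj z.
Proof. intros h1 h3 H. pose proof (H 0%nat ltac:(lia)). pose proof (H 1%nat ltac:(lia)). simpl in *; lra. Qed.

Lemma soc2 x1 y1 u1 v1 x2 y2 u2 v2 t :
  0 <= u1 -> 0 <= v1 -> 0 <= u2 -> 0 <= v2 -> 0 <= t <= 1 ->
  x1^2 + y1^2 <= u1 * v1 -> x2^2 + y2^2 <= u2 * v2 ->
  (t*x1 + (1-t)*x2)^2 + (t*y1+(1-t)*y2)^2 <= (t*u1+(1-t)*u2)*(t*v1+(1-t)*v2).
Proof.
 intros. set (P := x1*x2+y1*y2). set (A := u1*v2+u2*v1).
 assert (HA : 0 <= A) by (unfold A; nra).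
 assert (HCS : P^2 <= (x1^2+y1^2)*(x2^2+y2^2)).
 { replace ((x1^2+y1^2)*(x2^2+y2^2)) with (P^2 + (x1*y2-x2*y1)^2) by (unfold P; ring).
   pose proof (pow2_ge_0 (x1*y2-x2*y1)); lra. }
 assert (HA4 : 4 * (u1*v1)*(u2*v2) <= A^2).
 { replace (A^2) with (4 * (u1*v1)*(u2*v2) + (u1*v2-u2*v1)^2) by (unfold A; ring).
   pose proof (pow2_ge_0 (u1*v2-u2*v1)); lra. }
 assert (HPP : P^2 <= (u1*v1)*(u2*v2)).
 { apply Rle_trans with ((x1^2+y1^2)*(x2^2+y2^2)); auto. apply Rmult_le_compat; nra. }
 assert (HP : 2 * P <= A) by nra.
 assert (t*(1-t) >= 0) by nra.
 replace ((t*x1 + (1-t)*x2)^2 + (t*y1+(1-t)*y2)^2) with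
   (t^2*(x1^2+y1^2) + (1-t)^2*(x2^2+y2^2) + 2*(t*(1-t))*P) by (unfold P; ring).
 replace ((t*u1+(1-t)*u2)*(t*v1+(1-t)*v2)) with (t^2*(u1*v1) + (1-t)^2*(u2*v2) + (t*(1-t))*A) by (unfold A; ring).
 assert (t^2*(x1^2+y1^2) <= t^2*(u1*v1)) by (apply Rmult_le_compat_l; auto; apply pow2_ge_0).
 assert ((1-t)^2*(x2^2+y2^2) <= (1-t)^2*(u2*v2)) by (apply Rmult_le_compat_l; auto; apply pow2_ge_0).
 assert ((t*(1-t))*(2*P) <= (t*(1-t))*A) by (apply Rmult_le_compat_l; auto; lra).
 lra.
Qed.

Lemma Kle_convex lo hi : 0 <= cii lo -> 0 <= cjj lo -> convex (Kle lo hi).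
Proof. intros h1 h3 x y t [Bx Qx] [By Qy] Ht. split; [apply box_convex; auto|].
 destruct (box_nonneg _ _ _ h1 h3 Bx). destruct (box_nonneg _ _ _ h1 h3 By).
 simpl. apply soc2; auto. Qed.

Definition seg p x s := padd (pscale s x) (pscale (1 - s) p).

Lemma cross p x : qf p < 0 -> 0 <= qf x -> exists s, 0 < s <= 1 /\ qf (seg p x s) = 0.
Proof.
 intros Hp Hx. destruct (Req_dec (qf x) 0) as [E|E].
 - exists 1. split; [lra|]. replace (seg p x 1) with x; auto. unfold seg; apply pt_eq4; simpl; ring.
 - set (f := fun s => qf (seg p x s)).
   assert (Hc : continuity f). { unfold f, seg, qf; simpl. reg. }
   destruct (IVT f 0 1 Hc ltac:(lra)) as [s [Hs Hf]].
   + unfold f. replace (seg p x 0) with p; auto. unfold seg; apply pt_eq4; simpl; ring.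
   + unfold f. replace (seg p x 1) with x; [lra|]. unfold seg; apply pt_eq4; simpl; ring.
   + exists s. split; auto. split; [|lra]. destruct (Req_dec s 0); [|lra].
     subst. unfold f in Hf. replace (seg p x 0) with p in Hf; [lra|]. unfold seg; apply pt_eq4; simpl; ring.
Qed.

Section U.
Variables lo hi : pt.
Hypothesis h1 : 0 <= cii lo.
Hypothesis h3 : 0 <= cjj lo.

Definition T := conv (Keq lo hi).
Definition U z := box lo hi z /\ (0 <= qf z \/ T z).

Lemma T_Kle z : T z -> Kle lo hi z.
Proof. intros H. apply (convex_conv_sub _ (Kle_convex lo hi h1 h3)).
 eapply conv_mono; [|exact H]. intros w [B Q]; split; auto; lra. Qed.

Lemma reach p x : U x -> box lo hi p -> qf p < 0 -> exists s, 0 < s <= 1 /\ T (seg p x s).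
Proof.
 intros [Bx [Qx|Tx]] Bp Qp.
 - destruct (cross p x Qp Qx) as [s [Hs Q]]. exists s; split; auto.
   apply conv_incl. split.
   + apply box_convex; auto; lra.
   + unfold qf in Q; lra.
 - exists 1. split; [lra|]. replace (seg p x 1) with x; auto. unfold seg; apply pt_eq4; simpl; ring.
Qed.

Lemma U_convex : convex U.
Proof.
 intros x y t Ux Uy Ht. set (p := padd (pscale t x) (pscale (1 - t) y)).
 assert (Bp : box lo hi p) by (apply box_convex; auto; [apply Ux|apply Uy]).
 split; auto. destruct (Rle_lt_dec 0 (qf p)) as [Q|Q]; [left; auto|right].
 destruct (Req_dec t 0) as [E|E].
 { assert (Ep : p = y) by (unfold p; subst; apply pt_eq4; simpl; ring). rewrite Ep in *. destruct Uy as [_ [Q'|T']]; auto; lra. }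
 destruct (Req_dec t 1) as [E'|E'].
 { assert (Ep : p = x) by (unfold p; subst; apply pt_eq4; simpl; ring). rewrite Ep in *. destruct Ux as [_ [Q'|T']]; auto; lra. }
 destruct (reach p x Ux Bp Q) as [s [Hs Tx]].
 destruct (reach p y Uy Bp Q) as [s' [Hs' Ty]].
 set (a := s' * t / (s * (1 - t) + s' * t)).
 assert (Hd : 0 < s * (1 - t) + s' * t) by nra.
 assert (Ha : 0 <= a <= 1).
 { unfold a; split; [apply Rmult_le_pos; [nra|left; apply Rinv_0_lt_compat; lra]|].
   apply Rmult_le_reg_r with (s * (1 - t) + s' * t); auto. field_simplify; nra. }
 replace p with (padd (pscale a (seg p x s)) (pscale (1 - a) (seg p y s'))).
 - apply conv_convex; auto.
 - unfold a, seg, p; apply pt_eq4; simpl; field; lra.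
Qed.

End U.


Lemma first_root (f : R -> R) L : continuity f -> L <= 0 -> 0 <= f 0 ->
  exists m, L <= m <= 0 /\ 0 <= f m /\ forall t, L <= t < m -> f t < 0.
Proof.
 intros Hc HL H0.
 set (E := fun u => L <= u /\ forall s, L <= s < u -> f s < 0).
 assert (EL : E L) by (split; [lra|intros; lra]).
 assert (Eb : forall u, E u -> u <= 0).
 { intros u [_ Hu]. destruct (Rle_lt_dec u 0); auto. specialize (Hu 0 ltac:(lra)); lra. }
 destruct (completeness E) as [m [Hub Hlub]].
 { exists 0. intros u Hu; auto. }
 { exists L; auto. }
 assert (Hm1 : L <= m) by (apply Hub; auto).
 assert (Hm2 : m <= 0) by (apply Hlub; intros u Hu; auto).
 assert (Hbel : forall t, L <= t < m -> f t < 0).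
 { intros t Ht. apply NNPP; intros Hn.
   assert (m <= t); [|lra]. apply Hlub. intros u [Hu1 Hu2].
   destruct (Rle_lt_dec u t); auto. exfalso. apply Hn. apply Hu2; lra. }
 exists m. split; [lra|]. split; auto.
 destruct (Rle_lt_dec 0 (f m)) as [|Hneg]; auto. exfalso.
 pose proof (Hc m) as Hcm. unfold continuity_pt, continue_in, limit1_in, limit_in in Hcm. simpl in Hcm. unfold R_dist in Hcm.
 destruct (Hcm (- f m) ltac:(lra)) as [d [Hd Hdd]].
 assert (E (m + d / 2)).
 { split; [lra|]. intros s Hs. destruct (Rlt_le_dec s m) as [Hsm|Hsm]; [apply Hbel; lra|].
   destruct (Req_dec s m) as [->|Hne]; auto.
   assert (Rabs (f s - f m) < - f m).
   { apply Hdd. split; [split; [exact I|auto]|]. rewrite Rabs_right; lra. }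
   destruct (Rabs_def2 _ _ H). lra. }
 pose proof (Hub _ H). lra.
Qed.

Lemma last_root (f : R -> R) H : continuity f -> 0 <= H -> 0 <= f 0 ->
  exists M, 0 <= M <= H /\ 0 <= f M /\ forall t, M < t <= H -> f t < 0.
Proof.
 intros Hc HH H0.
 destruct (first_root (fun t => f (- t)) (- H)) as [m [Hm [Hf Hb]]].
 - intro x. apply (continuity_pt_comp (fun t => -t) f). reg. apply Hc.
 - lra.
 - replace (- 0) with 0 by ring; auto.
 - exists (- m). split; [lra|]. split; auto. intros t Ht.
   replace t with (- - t) by ring. apply Hb. lra.
Qed.

Definition ek (k : nat) : pt :=
  mkpt (if Nat.eqb k 0 then 1 else 0) (if Nat.eqb k 1 then 1 else 0)
       (if Nat.eqb k 2 then 1 else 0) (if Nat.eqb k 3 then 1 else 0).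

Lemma coord_ek i k : (i < 4)%nat -> (k < 4)%nat -> coord i (ek k) = if Nat.eqb i k then 1 else 0.
Proof. intros Hi Hk. destruct i as [|[|[|[|i]]]]; try lia; destruct k as [|[|[|[|k]]]]; try lia; reflexivity. Qed.

Lemma edge_convex lo hi k b : convex (edge lo hi k b).
Proof. intros x y t [Bx Ex] [By Ey] Ht. split; [apply box_convex; auto|].
 intros i Hi Hik. rewrite coord_add, !coord_scale, Ex, Ey; auto. ring. Qed.

Section Edge.
Variables lo hi : pt.

Definition EG k b := fun z => edge lo hi k b z /\ Gset z.

Lemma edge_extreme k b z0 c : (k < 4)%nat -> c <> 0 -> EG k b z0 ->
  (forall a, conv (EG k b) a -> edge lo hi k b a /\ c * coord k z0 <= c * coord k a) ->
  extreme (conv (EG k b)) z0.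
Proof.
 intros Hk Hc Hz Hall. split; [apply conv_incl; auto|].
 intros a a' t Ca Ca' Ht Hz0.
 destruct (Hall a Ca) as [Ea Ba]. destruct (Hall a' Ca') as [Ea' Ba'].
 assert (Hk0 : coord k z0 = t * coord k a + (1 - t) * coord k a').
 { rewrite Hz0 at 1. rewrite coord_add, !coord_scale. ring. }
 assert (Hka : coord k a = coord k z0 /\ coord k a' = coord k z0).
 { assert (c * (t * coord k a + (1 - t) * coord k a') = c * coord k z0) by (rewrite Hk0; ring).
   assert (t * (c * coord k a - c * coord k z0) >= 0) by (apply Rle_ge, Rmult_le_pos; lra).
   assert ((1-t) * (c * coord k a' - c * coord k z0) >= 0) by (apply Rle_ge, Rmult_le_pos; lra).
   assert (E1 : t * (c * coord k a - c * coord k z0) = 0) by nra.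
   assert (E2 : (1-t) * (c * coord k a' - c * coord k z0) = 0) by nra.
   apply Rmult_integral in E1. apply Rmult_integral in E2.
   destruct E1 as [E1|E1]; [lra|]. destruct E2 as [E2|E2]; [lra|].
   split; apply (Rmult_eq_reg_l c); auto; lra. }
 destruct Hz as [[_ Ez] _].
 split; apply pt_eq; intros i Hi; destruct (Nat.eq_dec i k) as [->|Hne]; try tauto.
 - rewrite (proj2 Ea i Hi Hne), Ez; auto.
 - rewrite (proj2 Ea' i Hi Hne), Ez; auto.
Qed.

Lemma edge_conv k b x : (k < 4)%nat -> EG k b x -> conv (Vset lo hi) x.
Proof.
 intros Hk [[Bx Ex] Gx].
 set (y := fun t => padd x (pscale t (ek k))).
 assert (Hy : forall t i, (i < 4)%nat -> coord i (y t) = coord i x + t * (if Nat.eqb i k then 1 else 0)).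
 { intros t i Hi. unfold y. rewrite coord_add, coord_scale, coord_ek; auto. }
 set (f := fun t => qf x + t * bil x (ek k) + t ^ 2 * qf (ek k)).
 assert (Hf : forall t, qf (y t) = f t) by (intros; unfold y, f; apply qf_line).
 assert (Hc : continuity f) by (unfold f; reg).
 assert (f0 : 0 <= f 0) by (rewrite <- Hf; replace (y 0) with x; [apply Gset_qf; auto|unfold y; apply pt_eq4; simpl; ring]).
 pose proof (Bx k Hk) as Bk.
 destruct (first_root f (coord k lo - coord k x) Hc ltac:(lra) f0) as [m [Hm [Hfm Hbm]]].
 destruct (last_root f (coord k hi - coord k x) Hc ltac:(lra) f0) as [M [HM [HfM HbM]]].
 assert (Hyz : forall z, edge lo hi k b z -> z = y (coord k z - coord k x)).
 { intros z [Bz Ez]. apply pt_eq. intros i Hi. rewrite Hy; auto.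
   destruct (Nat.eq_dec i k) as [->|Hne].
   - rewrite Nat.eqb_refl. ring.
   - rewrite (proj2 (Nat.eqb_neq i k) Hne), Ez, Ex; auto. ring. }
 assert (Hedge : forall t, coord k lo - coord k x <= t <= coord k hi - coord k x -> edge lo hi k b (y t)).
 { intros t Ht. split.
   - intros i Hi. rewrite Hy; auto. destruct (Nat.eq_dec i k) as [->|Hne].
     + rewrite Nat.eqb_refl. lra.
     + rewrite (proj2 (Nat.eqb_neq i k) Hne). rewrite Rmult_0_r, Rplus_0_r. auto.
   - intros i Hi Hne. rewrite Hy; auto. rewrite (proj2 (Nat.eqb_neq i k) Hne), Ex; auto. ring. }
 assert (Hall : forall a, conv (EG k b) a -> edge lo hi k b a /\
           coord k x + m <= coord k a <= coord k x + M).
 { intros a Ca. apply (convex_conv_sub (fun a => edge lo hi k b a /\ coord k x + m <= coord k a <= coord k x + M)); auto.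
   - intros u v t [Eu Bu] [Ev Bv] Ht. split; [apply edge_convex; auto|].
     rewrite coord_add, !coord_scale. apply convex_comb_R; auto.
   - eapply conv_mono; [|exact Ca]. intros z [Ez Gz].
     split; auto. pose proof (proj1 Ez k Hk). apply Gset_qf in Gz. rewrite (Hyz z Ez), Hf in Gz.
     split.
     + destruct (Rlt_le_dec (coord k z - coord k x) m); [|lra]. specialize (Hbm (coord k z - coord k x) ltac:(lra)). lra.
     + destruct (Rle_lt_dec (coord k z - coord k x) M); [lra|]. specialize (HbM (coord k z - coord k x) ltac:(lra)). lra. }
 assert (Vm : Vset lo hi (y m)).
 { exists k, b. split; auto. apply (edge_extreme k b (y m) 1); [auto|lra| |].
   - split; [apply Hedge; lra|apply Gset_qf; rewrite Hf; auto].
   - intros a Ca. destruct (Hall a Ca) as [Ea Ba]. split; auto. rewrite Hy, Nat.eqb_refl; auto. lra. }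
 assert (VM : Vset lo hi (y M)).
 { exists k, b. split; auto. apply (edge_extreme k b (y M) (-1)); [auto|lra| |].
   - split; [apply Hedge; lra|apply Gset_qf; rewrite Hf; auto].
   - intros a Ca. destruct (Hall a Ca) as [Ea Ba]. split; auto. rewrite Hy, Nat.eqb_refl; auto. lra. }
 assert (Hx : x = y 0) by (unfold y; apply pt_eq4; simpl; ring).
 destruct (Req_dec m M) as [E|E].
 - assert (Em : m = 0) by lra. rewrite Em in Vm. assert (conv (Vset lo hi) (y 0)) by (apply conv_incl; exact Vm). rewrite <- Hx in H. exact H.
 - set (lam := M / (M - m)).
   assert (Hl : 0 <= lam <= 1).
   { unfold lam. split; [apply Rmult_le_pos; [lra|left; apply Rinv_0_lt_compat; lra]|].
     apply Rmult_le_reg_r with (M - m); [lra|]. field_simplify; lra. }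
   replace x with (padd (pscale lam (y m)) (pscale (1 - lam) (y M))).
   + apply conv_convex; auto; apply conv_incl; auto.
   + unfold y. apply pt_eq4; simpl; unfold lam; field; lra.
Qed.

End Edge.


Definition intb (l v u : R) : nat := if Rlt_dec l v then (if Rlt_dec v u then 1%nat else 0%nat) else 0%nat.

Lemma intb01 l v u : intb l v u = 0%nat /\ ~ (l < v < u) \/ intb l v u = 1%nat /\ l < v < u.
Proof. unfold intb. destruct (Rlt_dec l v); destruct (Rlt_dec v u); [right|left|left|left]; split; auto; lra. Qed.

Lemma stp_ok a b l u : l < a < u -> b <> 0 ->
  exists s, 0 < s /\ (a + s * b = l \/ a + s * b = u) /\ forall t, 0 <= t <= s -> l <= a + t * b <= u.
Proof.
 intros Ha Hb. destruct (Rlt_dec 0 b) as [Hp|Hn].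
 - exists ((u - a) / b). split; [apply Rdiv_lt_0_compat; lra|]. split; [right; field; lra|].
   intros t Ht. assert (t * b <= (u - a) / b * b) by (apply Rmult_le_compat_r; lra).
   assert (0 <= t * b) by (apply Rmult_le_pos; lra).
   replace ((u - a) / b * b) with (u - a) in * by (field; lra). lra.
 - assert (b < 0) by lra. exists ((l - a) / b).
   assert (0 < (l - a) / b).
   { replace ((l - a) / b) with ((a - l) / (- b)) by (field; lra). apply Rdiv_lt_0_compat; lra. }
   split; auto. split; [left; field; lra|].
   intros t Ht. assert ((l - a) / b * (-b) >= t * (- b)) by (apply Rle_ge, Rmult_le_compat_r; lra).
   assert (0 <= t * (- b)) by (apply Rmult_le_pos; lra).
   replace ((l - a) / b * (-b)) with (a - l) in * by (field; lra). nra.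
Qed.

Lemma move2 a1 b1 l1 u1 a2 b2 l2 u2 : l1 < a1 < u1 -> l2 < a2 < u2 -> (b1 <> 0 \/ b2 <> 0) ->
  exists t, 0 < t /\ l1 <= a1 + t * b1 <= u1 /\ l2 <= a2 + t * b2 <= u2 /\
    ((a1 + t * b1 = l1 \/ a1 + t * b1 = u1) \/ (a2 + t * b2 = l2 \/ a2 + t * b2 = u2)).
Proof.
 intros H1 H2 Hb. destruct (Req_dec b1 0) as [E1|E1]; destruct (Req_dec b2 0) as [E2|E2].
 - exfalso; tauto.
 - destruct (stp_ok a2 b2 l2 u2 H2 E2) as [s [Hs [Hh Hin]]]. exists s. subst b1.
   split; auto. split; [rewrite Rmult_0_r, Rplus_0_r; lra|]. split; [apply Hin; lra|]. auto.
 - destruct (stp_ok a1 b1 l1 u1 H1 E1) as [s [Hs [Hh Hin]]]. exists s. subst b2.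
   split; auto. split; [apply Hin; lra|]. split; [rewrite Rmult_0_r, Rplus_0_r; lra|]. auto.
 - destruct (stp_ok a1 b1 l1 u1 H1 E1) as [s1 [Hs1 [Hh1 Hin1]]].
   destruct (stp_ok a2 b2 l2 u2 H2 E2) as [s2 [Hs2 [Hh2 Hin2]]].
   destruct (Rle_lt_dec s1 s2).
   + exists s1. split; auto. split; [apply Hin1; lra|]. split; [apply Hin2; lra|]. auto.
   + exists s2. split; auto. split; [apply Hin1; lra|]. split; [apply Hin2; lra|]. auto.
Qed.

Lemma bil_scale x c d : bil x (pscale c d) = c * bil x d.
Proof. unfold bil; simpl; ring. Qed.
Lemma qf_scale c d : qf (pscale c d) = c ^ 2 * qf d.
Proof. unfold qf; simpl; ring. Qed.

Section Rec.
Variables lo hi : pt.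
Hypothesis h1 : 0 <= cii lo.
Hypothesis h3 : 0 <= cjj lo.

Definition ib i x := intb (coord i lo) (coord i x) (coord i hi).
Definition nint x := (ib 0 x + ib 1 x + ib 2 x + ib 3 x)%nat.

Lemma ib01 i x : (ib i x = 0 \/ ib i x = 1)%nat.
Proof. unfold ib; destruct (intb01 (coord i lo) (coord i x) (coord i hi)); lia. Qed.

Lemma ib1 i x : ib i x = 1%nat -> coord i lo < coord i x < coord i hi.
Proof. unfold ib; destruct (intb01 (coord i lo) (coord i x) (coord i hi)) as [[A B]|[A B]]; auto; lia. Qed.

Lemma ib0 i x : ib i x = 0%nat -> ~ (coord i lo < coord i x < coord i hi).
Proof. unfold ib; destruct (intb01 (coord i lo) (coord i x) (coord i hi)) as [[A B]|[A B]]; auto; lia. Qed.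

Lemma ib_bound i x : (coord i x = coord i lo \/ coord i x = coord i hi) -> ib i x = 0%nat.
Proof. intros H. destruct (ib01 i x) as [|A]; auto. apply ib1 in A. lra. Qed.

Lemma nint_lt i j x y : (i < 4)%nat -> (j < 4)%nat -> i <> j ->
  (forall k, (k < 4)%nat -> k <> i -> k <> j -> coord k y = coord k x) ->
  ib i x = 1%nat -> ib j x = 1%nat -> (ib i y = 0 \/ ib j y = 0)%nat -> (nint y < nint x)%nat.
Proof.
 intros Hi Hj Hij Heq Ix Jx Hy.
 assert (Hk : forall k, (k < 4)%nat -> k = i \/ k = j \/ ib k y = ib k x).
 { intros k Hk. destruct (Nat.eq_dec k i); auto. destruct (Nat.eq_dec k j); auto.
   right; right. unfold ib. rewrite Heq; auto. }
 pose proof (Hk 0%nat ltac:(lia)). pose proof (Hk 1%nat ltac:(lia)).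
 pose proof (Hk 2%nat ltac:(lia)). pose proof (Hk 3%nat ltac:(lia)).
 pose proof (ib01 0 y). pose proof (ib01 1 y). pose proof (ib01 2 y). pose proof (ib01 3 y).
 pose proof (ib01 0 x). pose proof (ib01 1 x). pose proof (ib01 2 x). pose proof (ib01 3 x).
 unfold nint.
 destruct i as [|[|[|[|i]]]]; try lia; destruct j as [|[|[|[|j]]]]; try lia.
Qed.

Lemma base x : (nint x <= 1)%nat -> box lo hi x -> Gset x -> conv (Vset lo hi) x.
Proof.
 intros Hn Bx Gx.
 assert (Hk : exists k, (k < 4)%nat /\ forall i, (i < 4)%nat -> i <> k -> ib i x = 0%nat).
 { unfold nint in Hn.
   pose proof (ib01 0 x). pose proof (ib01 1 x). pose proof (ib01 2 x). pose proof (ib01 3 x).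
   destruct (Nat.eq_dec (ib 0 x) 1); [exists 0%nat|destruct (Nat.eq_dec (ib 1 x) 1); [exists 1%nat|
     destruct (Nat.eq_dec (ib 2 x) 1); [exists 2%nat|exists 3%nat]]];
   (split; [lia|intros i Hi Hik; destruct i as [|[|[|[|i]]]]; lia]). }
 destruct Hk as [k [Hk Hik]].
 set (b := fun i => if Req_EM_T (coord i x) (coord i hi) then true else false).
 apply (edge_conv lo hi k b x Hk). split; auto. split; auto.
 intros i Hi Hne. unfold b. pose proof (ib0 i x (Hik i Hi Hne)). pose proof (Bx i Hi).
 destruct (Req_EM_T (coord i x) (coord i hi)); auto.
 destruct (Req_dec (coord i x) (coord i lo)); auto. exfalso; apply H; lra.
Qed.

Lemma step i j d x : (i < 4)%nat -> (j < 4)%nat -> i <> j -> ib i x = 1%nat -> ib j x = 1%nat ->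
  box lo hi x -> Gset x ->
  (forall k, (k < 4)%nat -> k <> i -> k <> j -> coord k d = 0) ->
  (coord i d <> 0 \/ coord j d <> 0) -> bil x d = 0 -> 0 <= qf d ->
  (forall y, box lo hi y -> Gset y -> (nint y < nint x)%nat -> conv (Vset lo hi) y) ->
  conv (Vset lo hi) x.
Proof.
 intros Hi Hj Hij Ix Jx Bx Gx Hsup Hnz Hbil Hq IH.
 pose proof (ib1 _ _ Ix) as Ii. pose proof (ib1 _ _ Jx) as Ij.
 assert (Hmv : forall e, (forall k, (k < 4)%nat -> k <> i -> k <> j -> coord k e = 0) ->
    (coord i e <> 0 \/ coord j e <> 0) -> bil x e = 0 -> 0 <= qf e ->
    exists t, 0 < t /\ box lo hi (padd x (pscale t e)) /\ Gset (padd x (pscale t e)) /\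
      (nint (padd x (pscale t e)) < nint x)%nat).
 { intros e Hs Hn Hb Hqe.
   destruct (move2 _ (coord i e) _ _ _ (coord j e) _ _ Ii Ij Hn) as [t [Ht [Bi [Bj Hh]]]].
   exists t. split; auto.
   assert (Hc : forall k, coord k (padd x (pscale t e)) = coord k x + t * coord k e)
     by (intros; rewrite coord_add, coord_scale; auto).
   split; [|split].
   - intros k Hk. rewrite Hc. destruct (Nat.eq_dec k i) as [->|]; auto.
     destruct (Nat.eq_dec k j) as [->|]; auto. rewrite Hs; auto. rewrite Rmult_0_r, Rplus_0_r; auto.
   - apply Gset_qf. rewrite qf_line, Hb. apply Gset_qf in Gx. pose proof (pow2_ge_0 t).
     assert (0 <= t ^ 2 * qf e) by (apply Rmult_le_pos; auto). lra.
   - apply (nint_lt i j); auto.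
     + intros k Hk H1 H2. rewrite Hc, Hs; auto. ring.
     + destruct Hh as [Hh|Hh]; [left|right]; apply ib_bound; rewrite Hc; auto. }
 destruct (Hmv d Hsup Hnz Hbil Hq) as [t1 [Ht1 [B1 [G1 N1]]]].
 destruct (Hmv (pscale (-1) d)) as [t2 [Ht2 [B2 [G2 N2]]]].
 - intros k Hk H1 H2. rewrite coord_scale, Hsup; auto. ring.
 - rewrite !coord_scale. destruct Hnz; [left|right]; intro; apply H; lra.
 - rewrite bil_scale, Hbil; ring.
 - rewrite qf_scale. apply Rmult_le_pos; auto. apply pow2_ge_0.
 - set (lam := t2 / (t1 + t2)).
   assert (Hl : 0 <= lam <= 1).
   { unfold lam. split; [apply Rmult_le_pos; [lra|left; apply Rinv_0_lt_compat; lra]|].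
     apply Rmult_le_reg_r with (t1 + t2); [lra|]. field_simplify; lra. }
   replace x with (padd (pscale lam (padd x (pscale t1 d))) (pscale (1 - lam) (padd x (pscale t2 (pscale (-1) d))))).
   + apply conv_convex; auto.
   + apply pt_eq4; simpl; unfold lam; field; lra.
Qed.

Lemma dir i j x : (i < 4)%nat -> (j < 4)%nat -> (i < j)%nat -> box lo hi x ->
  exists d, (forall k, (k < 4)%nat -> k <> i -> k <> j -> coord k d = 0) /\
    (coord i d <> 0 \/ coord j d <> 0) /\ bil x d = 0 /\ 0 <= qf d.
Proof.
 intros Hi Hj Hij Bx. destruct (box_nonneg lo hi x h1 h3 Bx) as [P1 P2].
 Ltac supp := intros k Hk H1 H2; destruct k as [|[|[|[|k]]]]; simpl; try lia; reflexivity.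
 destruct i as [|[|[|[|i]]]]; try lia; destruct j as [|[|[|[|j]]]]; try lia.
 - destruct (Req_dec (cjj x) 0) as [E|E].
   + exists (mkpt 1 0 0 0). split; [supp|]. split; [left; simpl; lra|]. unfold bil, qf; simpl; rewrite E; split; ring_simplify; lra.
   + exists (mkpt (cii x) (- cjj x) 0 0). split; [supp|]. split; [right; simpl; lra|]. unfold bil, qf; simpl; split; [ring|]. nra.
 - destruct (Req_dec (cjj x) 0) as [E|E].
   + exists (mkpt 1 0 0 0). split; [supp|]. split; [left; simpl; lra|]. unfold bil, qf; simpl; rewrite E; split; ring_simplify; lra.
   + exists (mkpt (2 * cij x) 0 (cjj x) 0). split; [supp|]. split; [right; simpl; lra|]. unfold bil, qf; simpl; split; [ring|]. nra.
 - destruct (Req_dec (cjj x) 0) as [E|E].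
   + exists (mkpt 1 0 0 0). split; [supp|]. split; [left; simpl; lra|]. unfold bil, qf; simpl; rewrite E; split; ring_simplify; lra.
   + exists (mkpt (2 * sij x) 0 0 (cjj x)). split; [supp|]. split; [right; simpl; lra|]. unfold bil, qf; simpl; split; [ring|]. nra.
 - destruct (Req_dec (cii x) 0) as [E|E].
   + exists (mkpt 0 1 0 0). split; [supp|]. split; [left; simpl; lra|]. unfold bil, qf; simpl; rewrite E; split; ring_simplify; lra.
   + exists (mkpt 0 (2 * cij x) (cii x) 0). split; [supp|]. split; [right; simpl; lra|]. unfold bil, qf; simpl; split; [ring|]. nra.
 - destruct (Req_dec (cii x) 0) as [E|E].
   + exists (mkpt 0 1 0 0). split; [supp|]. split; [left; simpl; lra|]. unfold bil, qf; simpl; rewrite E; split; ring_simplify; lra.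
   + exists (mkpt 0 (2 * sij x) 0 (cii x)). split; [supp|]. split; [right; simpl; lra|]. unfold bil, qf; simpl; split; [ring|]. nra.
 - destruct (Req_dec (cij x) 0) as [E|E]; [destruct (Req_dec (sij x) 0) as [E'|E']|].
   + exists (mkpt 0 0 1 0). split; [supp|]. split; [left; simpl; lra|]. unfold bil, qf; simpl; rewrite E, E'; split; ring_simplify; lra.
   + exists (mkpt 0 0 (- sij x) (cij x)). split; [supp|]. split; [left; simpl; lra|]. unfold bil, qf; simpl; split; [ring|]. nra.
   + exists (mkpt 0 0 (- sij x) (cij x)). split; [supp|]. split; [right; simpl; lra|]. unfold bil, qf; simpl; split; [ring|]. nra.
Qed.

Lemma boxG_conv x : box lo hi x -> Gset x -> conv (Vset lo hi) x.
Proof.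
 assert (forall n x, (nint x <= n)%nat -> box lo hi x -> Gset x -> conv (Vset lo hi) x); [|eauto].
 induction n; intros y Hn By Gy.
 - apply base; auto; lia.
 - destruct (Compare_dec.le_lt_dec (nint y) 1) as [Hle|Hgt]; [apply base; auto|].
   assert (Hp : exists i j, (i < 4)%nat /\ (j < 4)%nat /\ (i < j)%nat /\ ib i y = 1%nat /\ ib j y = 1%nat).
   { unfold nint in Hgt.
     destruct (ib01 0 y); destruct (ib01 1 y); destruct (ib01 2 y); destruct (ib01 3 y); try lia;
     first [exists 0%nat, 1%nat; lia | exists 0%nat, 2%nat; lia | exists 0%nat, 3%nat; lia |
            exists 1%nat, 2%nat; lia | exists 1%nat, 3%nat; lia | exists 2%nat, 3%nat; lia]. }
   destruct Hp as [i [j [Hi [Hj [Hij [Iy Jy]]]]]].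
   destruct (dir i j y Hi Hj Hij By) as [d [Hs [Hnz [Hb Hq]]]].
   apply (step i j d y); auto; try lia.
   intros z Bz Gz Hz. apply IHn; auto. lia.
Qed.

End Rec.


Definition fin (P : pt -> Prop) := exists l, forall z, P z -> In z l.

Lemma fin_2 (P : pt -> Prop) : (forall a b c, P a -> P b -> P c -> a = b \/ a = c \/ b = c) -> fin P.
Proof.
 intros H. destruct (classic (exists z, P z)) as [[z1 H1]|N].
 - destruct (classic (exists z, P z /\ z <> z1)) as [[z2 [H2 N2]]|N'].
   + exists [z1; z2]. intros z Hz. destruct (H z1 z2 z H1 H2 Hz) as [E|[E|E]].
     * subst; tauto.
     * subst; simpl; auto.
     * subst; simpl; auto.
   + exists [z1]. intros z Hz. left. apply NNPP. intro Hn. apply N'. exists z; split; auto.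
 - exists []. intros z Hz. apply N. eauto.
Qed.

Lemma fin_sub (P Q : pt -> Prop) : (forall z, P z -> Q z) -> fin Q -> fin P.
Proof. intros H [l Hl]. exists l; auto. Qed.

Lemma fin_ex_bool (Q : bool -> pt -> Prop) : (forall b, fin (Q b)) -> fin (fun z => exists b, Q b z).
Proof. intros H. destruct (H true) as [l1 H1]. destruct (H false) as [l2 H2].
 exists (l1 ++ l2). intros z [[|] Hz]; apply in_or_app; auto. Qed.

Lemma fin_ex_k4 (Q : nat -> pt -> Prop) : (forall k, (k < 4)%nat -> fin (Q k)) ->
  fin (fun z => exists k, (k < 4)%nat /\ Q k z).
Proof. intros H.
 destruct (H 0%nat ltac:(lia)) as [l0 H0]. destruct (H 1%nat ltac:(lia)) as [l1 H1].
 destruct (H 2%nat ltac:(lia)) as [l2 H2]. destruct (H 3%nat ltac:(lia)) as [l3 H3].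
 exists (l0 ++ l1 ++ l2 ++ l3). intros z [k [Hk Hz]].
 destruct k as [|[|[|[|k]]]]; try lia; repeat (apply in_or_app; try (left; auto; fail); right); auto.
Qed.

Lemma fin_exact (P : pt -> Prop) : fin P -> exists l, NoDup l /\ forall z, P z <-> In z l.
Proof.
 intros [L HL].
 assert (forall L : list pt, exists l, NoDup l /\ forall z, In z l <-> (In z L /\ P z)).
 { induction L0 as [|a L0 [l [Nl Hl]]].
   - exists []. split; [constructor|]. simpl; tauto.
   - destruct (classic (P a /\ ~ In a l)) as [[Pa Na]|Hn].
     + exists (a :: l). split; [constructor; auto|]. intros z; simpl. rewrite Hl. split.
       * intros [<-|[? ?]]; auto.
       * intros [[<-|Hz] Pz]; auto.
     + exists l. split; auto. intros z. rewrite Hl; simpl. split; [tauto|].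
       intros [[<-|Hz] Pz]; auto. split; auto. apply NNPP; intro Hn2.
       apply Hn; split; auto. rewrite Hl. tauto. }
 destruct (H L) as [l [Nl Hl]]. exists l; split; auto. intros z; rewrite Hl. split; [|tauto].
 intros Pz; split; auto.
Qed.

Section Fin.
Variables lo hi : pt.

Lemma edge_eq k b u v : (k < 4)%nat -> edge lo hi k b u -> edge lo hi k b v -> coord k u = coord k v -> u = v.
Proof. intros Hk [_ Eu] [_ Ev] Hc. apply pt_eq. intros i Hi.
 destruct (Nat.eq_dec i k) as [->|Hne]; auto. rewrite Eu, Ev; auto. Qed.

Lemma C_edge k b z : conv (EG lo hi k b) z -> edge lo hi k b z.
Proof. intros H. apply (convex_conv_sub _ (edge_convex lo hi k b)).
 eapply conv_mono; [|exact H]. intros w [E _]; auto. Qed.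

Lemma mid k b u v w : (k < 4)%nat -> conv (EG lo hi k b) u -> conv (EG lo hi k b) w ->
  extreme (conv (EG lo hi k b)) v -> coord k u < coord k v < coord k w -> False.
Proof.
 intros Hk Cu Cw [Cv Ev] Hc.
 pose proof (C_edge _ _ _ Cu) as Eu. pose proof (C_edge _ _ _ Cv) as Evv. pose proof (C_edge _ _ _ Cw) as Ew.
 set (lam := (coord k w - coord k v) / (coord k w - coord k u)).
 assert (Hl : 0 < lam < 1).
 { unfold lam. split; [apply Rdiv_lt_0_compat; lra|].
   apply Rmult_lt_reg_r with (coord k w - coord k u); [lra|]. field_simplify; lra. }
 destruct (Ev u w lam Cu Cw Hl) as [E1 _].
 - apply pt_eq. intros i Hi. rewrite coord_add, !coord_scale.
   destruct (Nat.eq_dec i k) as [->|Hne].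
   + unfold lam. field. lra.
   + rewrite (proj2 Eu i Hi Hne), (proj2 Ew i Hi Hne), (proj2 Evv i Hi Hne). ring.
 - subst. lra.
Qed.

Lemma three k b : (k < 4)%nat -> forall u v w,
  extreme (conv (EG lo hi k b)) u -> extreme (conv (EG lo hi k b)) v -> extreme (conv (EG lo hi k b)) w ->
  u = v \/ u = w \/ v = w.
Proof.
 intros Hk u v w Hu Hv Hw.
 pose proof (C_edge _ _ _ (proj1 Hu)). pose proof (C_edge _ _ _ (proj1 Hv)). pose proof (C_edge _ _ _ (proj1 Hw)).
 destruct (Req_dec (coord k u) (coord k v)) as [E|E]; [left; apply (edge_eq k b); auto|].
 destruct (Req_dec (coord k u) (coord k w)) as [E'|E']; [right; left; apply (edge_eq k b); auto|].
 destruct (Req_dec (coord k v) (coord k w)) as [E''|E'']; [right; right; apply (edge_eq k b); auto|].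
 exfalso.
 destruct (Rtotal_order (coord k u) (coord k v)) as [A|[A|A]]; [|lra|];
 destruct (Rtotal_order (coord k u) (coord k w)) as [B|[B|B]]; try lra;
 destruct (Rtotal_order (coord k v) (coord k w)) as [C|[C|C]]; try lra.
 - apply (mid k b u v w); auto; [apply Hu|apply Hw].
 - apply (mid k b u w v); auto; [apply Hu|apply Hv].
 - apply (mid k b w u v); auto; [apply Hw|apply Hv].
 - apply (mid k b v u w); auto; [apply Hv|apply Hw].
 - apply (mid k b v w u); auto; [apply Hv|apply Hu].
 - apply (mid k b w v u); auto; [apply Hw|apply Hu].
Qed.

Definition tup (b0 b1 b2 b3 : bool) : nat -> bool :=
  fun i => match i with 0%nat => b0 | 1%nat => b1 | 2%nat => b2 | _ => b3 end.

Lemma extreme_ext (S S' : pt -> Prop) z : (forall x, S x <-> S' x) -> extreme (conv S) z -> extreme (conv S') z.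
Proof.
 intros H [C E]. split; [eapply conv_mono; [|exact C]; apply H|].
 intros x y t Cx Cy. apply E; (eapply conv_mono; [|eassumption]); apply H.
Qed.

Lemma V_fin : fin (Vset lo hi).
Proof.
 apply (fin_sub _ (fun z => exists k, (k < 4)%nat /\ exists b0 b1 b2 b3,
    extreme (conv (EG lo hi k (tup b0 b1 b2 b3))) z)).
 - intros z [k [b [Hk He]]]. exists k; split; auto. exists (b 0%nat), (b 1%nat), (b 2%nat), (b 3%nat).
   eapply extreme_ext; [|exact He]. intros x. unfold EG, edge.
   assert (forall i, (i < 4)%nat -> b i = tup (b 0%nat) (b 1%nat) (b 2%nat) (b 3%nat) i)
     by (intros i Hi; destruct i as [|[|[|[|i]]]]; try lia; reflexivity).
   split; intros [[Bx Ex] Gx]; split; auto; split; auto; intros i Hi Hne.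
   + rewrite <- H; auto.
   + rewrite H; auto.
 - apply fin_ex_k4. intros k Hk. repeat (apply fin_ex_bool; intros ?). apply fin_2. apply three; auto.
Qed.

End Fin.

Definition mix t (l1 l2 : list R) := map (fun p => t * fst p + (1 - t) * snd p) (combine l1 l2).

Lemma comb_in (l : list pt) v : In v l -> comb_of l v.
Proof.
 induction l as [|a l IH]; [simpl; tauto|]. intros [<-|H].
 - exists (1 :: repeat 0 (length l)). split; [simpl; rewrite repeat_length; auto|].
   split; [constructor; [lra|apply Forall_forall; intros x Hx; apply repeat_spec in Hx; lra]|].
   assert (Hz : forall n (l' : list pt), psum (map (fun p => pscale (fst p) (snd p)) (combine (repeat 0 n) l')) = pzero).
   { induction n; intros [|c l']; simpl; auto. rewrite IHn. apply pt_eq4; simpl; ring. }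
   assert (Hs : forall n, fold_right Rplus 0 (repeat 0 n) = 0) by (induction n; simpl; auto; lra).
   split; simpl; [rewrite Hs; ring|]. rewrite Hz. apply pt_eq4; simpl; ring.
 - destruct (IH H) as [lam [Hl [Hn [Hs Hz]]]]. exists (0 :: lam). split; [simpl; auto|].
   split; [constructor; auto; lra|]. split; [simpl; lra|]. simpl. rewrite <- Hz. apply pt_eq4; simpl; ring.
Qed.

Lemma comb_convex (l : list pt) : convex (comb_of l).
Proof.
 intros x y t [l1 [L1 [N1 [S1 Z1]]]] [l2 [L2 [N2 [S2 Z2]]]] Ht.
 exists (mix t l1 l2).
 assert (Hlen : forall (m1 m2 : list R), length m1 = length l -> length m2 = length l -> length (mix t m1 m2) = length l).
 { intros; unfold mix; rewrite length_map, length_combine; lia. }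
 split; [auto|]. split.
 - unfold mix. apply Forall_forall. intros r Hr. apply in_map_iff in Hr. destruct Hr as [[a b] [<- Hab]].
   simpl. pose proof (in_combine_l _ _ _ _ Hab). pose proof (in_combine_r _ _ _ _ Hab).
   rewrite Forall_forall in N1, N2. specialize (N1 a H). specialize (N2 b H0). nra.
 - assert (forall (m1 m2 : list R) (ll : list pt), length m1 = length ll -> length m2 = length ll ->
     fold_right Rplus 0 (mix t m1 m2) = t * fold_right Rplus 0 m1 + (1 - t) * fold_right Rplus 0 m2 /\
     psum (map (fun p => pscale (fst p) (snd p)) (combine (mix t m1 m2) ll)) =
     padd (pscale t (psum (map (fun p => pscale (fst p) (snd p)) (combine m1 ll))))
          (pscale (1 - t) (psum (map (fun p => pscale (fst p) (snd p)) (combine m2 ll))))).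
   { induction m1 as [|a m1 IH]; intros [|b m2] [|c ll] E1 E2; simpl in *; try lia.
     - split; [ring|apply pt_eq4; simpl; ring].
     - destruct (IH m2 ll) as [A B]; try lia. unfold mix in A, B. rewrite A, B. split; [ring|].
       apply pt_eq4; simpl; ring. }
   destruct (H l1 l2 l L1 L2) as [A B]. rewrite A, B, S1, S2, Z1, Z2. split; [ring|auto].
Qed.

Lemma comb_conv (V : pt -> Prop) (l : list pt) : (forall z, V z <-> In z l) ->
  forall z, comb_of l z <-> conv V z.
Proof.
 intros HV z. split.
 - intros [lam [Hl [Hn [Hs Hz]]]]. exists (combine lam l). split; [|split].
   + apply Forall_forall. intros [a s] Has. simpl. split.
     * rewrite Forall_forall in Hn. apply Hn. eapply in_combine_l; eauto.
     * apply HV. eapply in_combine_r; eauto.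
   + rewrite <- Hs. clear -Hl. revert l Hl. induction lam; intros [|c l] Hl; simpl in *; try lia; auto.
     rewrite IHlam; auto.
   + auto.
 - intros H. apply (convex_conv_sub _ (comb_convex l)). eapply conv_mono; [|exact H].
   intros x Hx. apply comb_in, HV; auto.
Qed.


Theorem proposition2 (lo hi : pt)
  (h1 : 0 <= cii lo) (h2 : cii lo < cii hi)
  (h3 : 0 <= cjj lo) (h4 : cjj lo < cjj hi)
  (h5 : cij lo < cij hi) (h6 : sij lo < sij hi) :
  (exists l : list pt, NoDup l /\ forall z, Vset lo hi z <-> In z l) /\
  (forall z, conv (Keq lo hi) z <-> (Kle lo hi z /\ conv (Vset lo hi) z)) /\
  (forall l : list pt, NoDup l -> (forall z, Vset lo hi z <-> In z l) ->
     forall z, conv (Keq lo hi) z <->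
       (box lo hi z /\ cij z ^ 2 + sij z ^ 2 <= cii z * cjj z /\ comb_of l z)).
Proof.
 assert (P2 : forall z, conv (Keq lo hi) z <-> (Kle lo hi z /\ conv (Vset lo hi) z)).
 { intros z. split.
   - intros H. split; [apply (T_Kle lo hi h1 h3); exact H|].
     apply conv_conv. eapply conv_mono; [|exact H]. intros x [Bx Qx].
     apply (boxG_conv lo hi h1 h3); auto. unfold Gset; lra.
   - intros [[Bz Qz] Cz].
     assert (Uz : U lo hi z).
     { apply (convex_conv_sub _ (U_convex lo hi)). eapply conv_mono; [|exact Cz].
       intros x [k [b [Hk He]]]. apply extreme_in in He. destruct He as [[Bx _] Gx].
       split; auto. left. apply Gset_qf; auto. }
     destruct Uz as [_ [Q|Tz]]; auto.
     apply conv_incl. split; auto. unfold qf in Q; lra. }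
 split; [|split; auto].
 - apply fin_exact, V_fin.
 - intros l _ HV z. rewrite P2, (comb_conv _ l HV). unfold Kle. tauto.
Qed.
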